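(* Let $n\geq1$ and let $G_n$ be the connected anti-regular graph with loops on $n$ vertices. The eigenvalues $\lambda_1,\ldots,\lambda_n$ of the adjacency matrix $A(G_n)$ are $$\lambda_j=\frac{(-1)^{n+1}}{2\cos\left(\frac{2j-1}{2n+1}\pi\right)},\qquad j=1,2,\ldots,n.$$ Consequently, all eigenvalues of $A(G_n)$ are simple.
   Context: A graph with loops is a pair $(V,E)$ with $E$ a set of 2-element multisets of $V$ (loops allowed, at most one per vertex, no multiple edges); the degree of a vertex counts a loop once. An anti-regular graph with loops is one in which all vertex degrees are distinct; for each $n\ge1$ there is, up to isomorphism, a unique connected one on $n$ vertices, denoted $G_n$, with degree sequence $(1,2,\ldots,n)$. Equivalently, $A(G_n)$ is permutation similar to the $n\times n$ matrix with $(i,j)$ entry $1$ if $i+j\ge n+1$ and $0$ otherwise. The adjacency matrix has diagonal entry $1$ exactly at vertices with a loop. *)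

(* Defs.v *)
From HB Require Import structures.
From mathcomp Require Import all_boot all_order all_algebra all_field.
Set Implicit Arguments. Unset Strict Implicit. Unset Printing Implicit Defensive.
Import Order.TTheory GRing.Theory Num.Theory.
Local Open Scope ring_scope.

(* Adjacency matrix of G_n (up to permutation similarity): with 0-based
   indices i, j < n, entry 1 iff (i+1)+(j+1) >= n+1, i.e. i + j + 1 >= n. *)
Definition antireg_adj (n : nat) : 'M[algC]_n :=
  \matrix_(i < n, j < n) (if (n <= i + j + 1)%N then 1 else 0).

(* cos (k * pi / m) for m >= 1:  m.-root (-1) is e^{i pi / m}
   (the m-th root of -1 of least nonnegative argument), so its k-th power is
   e^{i k pi / m}, whose real part is cos (k pi / m). *)
Definition cos_pi_frac (k m : nat) : algC := 'Re ((m.-root (-1)) ^+ k).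

Definition antireg_eig (n j : nat) : algC :=
  (-1) ^+ n.+1 / (2 * cos_pi_frac (2 * j - 1) (2 * n + 1)).

(* Main.v *)
Require Import Defs.
From HB Require Import structures.
From mathcomp Require Import all_boot all_order all_algebra all_field.
From mathcomp Require Import ring lra zify.
Import Order.TTheory GRing.Theory Num.Theory.
Local Open Scope ring_scope.
Set Implicit Arguments. Unset Strict Implicit. Unset Printing Implicit Defensive.

Lemma stepR (R : realFieldType) (a b c s : R) :
  a ^+ 2 + b ^+ 2 = 1 -> c ^+ 2 + s ^+ 2 = 1 -> 0 <= b -> 0 < c -> 0 < s ->
  0 <= s * a + c * b -> c * a - s * b < a.
Proof.
move=> h1 h2 hb hc hs hb'.
have hc1 : c < 1 by nra.
have [ha|ha] := lerP 0 a.
  have [ha0|ha0] := eqVneq a 0.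
    subst a; nra.
  have : 0 < a by rewrite lt_neqAle eq_sym ha0 ha.
  nra.
have hbp : 0 < b by nra.
nra.
Qed.

Lemma prodR (R : realFieldType) (a1 b1 a2 b2 : R) :
  a1 ^+ 2 + b1 ^+ 2 = 1 -> a2 ^+ 2 + b2 ^+ 2 = 1 -> 0 < b1 -> 0 < b2 ->
  0 < a1 * a2 - b1 * b2 -> 0 < a1 * b2 + b1 * a2 -> a1 * a2 - b1 * b2 < a1.
Proof.
move=> h1 h2 hb1 hb2 hc hs.
have [ha|ha] := lerP a1 0.
  have : a1 * a2 > 0 by nra.
  nra.
have : a2 <= 1 by nra.
nra.
Qed.

Lemma crossR (R : realFieldType) (a b a2 b2 : R) :
  a ^+ 2 + b ^+ 2 = 1 -> a2 ^+ 2 + b2 ^+ 2 = 1 -> 0 <= b -> 0 <= b2 ->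
  0 < b + b2 -> a2 < a -> 0 < b2 * a - a2 * b.
Proof.
move=> h1 h2 hb hb2 hbb ha.
have [ha2|ha2] := lerP 0 a2.
  have hq : a2 ^+ 2 < a ^+ 2 by nra.
  have hq2 : b ^+ 2 < b2 ^+ 2 by nra.
  have hbl : b < b2.
    rewrite ltNge; apply/negP => hh; nra.
  nra.
have [ha0|ha0] := lerP 0 a.
  have [e|e] := eqVneq a 0.
    subst a; nra.
  have hap : 0 < a by rewrite lt_neqAle eq_sym e ha0.
  have [hb0|hb0] := eqVneq b 0.
    subst b; have hb2p : 0 < b2 by lra. nra.
  have : 0 < b by rewrite lt_neqAle eq_sym hb0 hb.
  nra.
have hq : a ^+ 2 < a2 ^+ 2 by nra.
have hq2 : b2 ^+ 2 < b ^+ 2 by nra.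
have hbl : b2 < b.
  rewrite ltNge; apply/negP => hh; nra.
nra.
Qed.
Definition reR (x : algC) : algR := in_algR (Creal_Re x).
Definition imR (x : algC) : algR := in_algR (Creal_Im x).
Lemma unitR (x : algC) : `|x| = 1 -> reR x ^+ 2 + imR x ^+ 2 = 1.
Proof.
by move=> hx; apply: val_inj => /=; rewrite -!expr2 -normC2_Re_Im hx expr1n.
Qed.
Lemma reRM (x y : algC) : reR (x * y) = reR x * reR y - imR x * imR y.
Proof. by apply: val_inj => /=; rewrite ReM. Qed.
Lemma imRM (x y : algC) : imR (x * y) = reR x * imR y + reR y * imR x.
Proof. by apply: val_inj => /=; rewrite ImM. Qed.
Lemma reRc (x : algC) : reR x^* = reR x.
Proof. by apply: val_inj => /=; rewrite Re_conj. Qed.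
Lemma imRc (x : algC) : imR x^* = - imR x.
Proof. by apply: val_inj => /=; rewrite Im_conj. Qed.
Lemma reRN (x : algC) : reR (- x) = - reR x.
Proof. by apply: val_inj => /=; rewrite raddfN. Qed.
Lemma imRN (x : algC) : imR (- x) = - imR x.
Proof. by apply: val_inj => /=; rewrite raddfN. Qed.
Lemma le0R (x : algC) : (0 <= imR x) = (0 <= 'Im x). Proof. by []. Qed.
Lemma ltRR (x y : algC) : (reR x < reR y) = ('Re x < 'Re y). Proof. by []. Qed.

Lemma stepC (x q : algC) : `|x| = 1 -> `|q| = 1 -> 0 <= imR x -> 0 < reR q ->
  0 < imR q -> 0 <= imR (x * q) -> reR (x * q) < reR x.
Proof.
move=> hx hq h1 h2 h3 h4.
have := stepR (unitR hx) (unitR hq) h1 h2 h3.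
rewrite imRM in h4; rewrite reRM.
have -> : imR q * reR x + reR q * imR x = reR x * imR q + reR q * imR x by ring.
move=> /(_ h4); apply: le_lt_trans; rewrite le_eqVlt; apply/orP; left; apply/eqP; ring.
Qed.

Lemma prodC (u v : algC) : `|u| = 1 -> `|v| = 1 -> 0 < imR u -> 0 < imR v ->
  0 < reR (u * v) -> 0 < imR (u * v) -> reR (u * v) < reR u.
Proof.
move=> hu hv h1 h2; rewrite reRM imRM => h3 h4.
have h4' : 0 < reR u * imR v + imR u * reR v by lra.
exact: (prodR (unitR hu) (unitR hv) h1 h2 h3 h4').
Qed.

Lemma crossC (v w : algC) : `|v| = 1 -> `|w| = 1 -> 0 <= imR v -> 0 <= imR w ->
  0 < imR v + imR w -> reR w < reR v -> 0 < imR (w * v^*).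
Proof.
move=> hv hw h1 h2 h3 h4; rewrite imRM reRc imRc.
have := crossR (unitR hv) (unitR hw) h1 h2 h3 h4; lra.
Qed.


Lemma reR_real (x : algC) : x \is Num.real -> val (reR x) = x.
Proof. by move=> /Creal_ReP. Qed.

Lemma imR0_real (x : algC) : imR x = 0 -> x = val (reR x).
Proof. by move=> /(congr1 val) /= h; rewrite [LHS]Crect h mulr0 addr0. Qed.

Lemma reR1 : reR 1 = 1. Proof. by apply: val_inj => /=; rewrite (Creal_ReP _ _). Qed.
Lemma imR1 : imR 1 = 0. Proof. by apply: val_inj => /=; apply/Creal_ImP. Qed.
Lemma reRN1 : reR (-1) = -1. Proof. by rewrite reRN reR1. Qed.
Lemma imRN1 : imR (-1) = 0. Proof. by rewrite imRN imR1 oppr0. Qed.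

Lemma norm_conjX (x : algC) : `|x| = 1 -> x^* * x = 1.
Proof. by move=> h; rewrite mulrC -normCK h expr1n. Qed.

Section Zeta.
Variable m : nat.
Hypothesis m_odd : odd m.
Hypothesis m_gt1 : (1 < m)%N.
Let m_gt0 : (0 < m)%N. Proof. exact: ltnW. Qed.

Definition zz := m.-root (-1 : algC).

Lemma zm : zz ^+ m = -1. Proof. exact: rootCK. Qed.

Lemma unitm (y : algC) : y ^+ m = -1 -> `|y| = 1.
Proof.
move=> hy; apply/eqP; rewrite -(pexpr_eq1 m_gt0) ?normr_ge0 //.
by rewrite -normrX hy normrN normr1.
Qed.

Lemma N1m : (-1 : algC) ^+ m = -1.
Proof. by rewrite -signr_odd m_odd expr1. Qed.

Lemma conjm (y : algC) : y ^+ m = -1 -> y^* ^+ m = -1.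
Proof. by move=> h; rewrite -rmorphXn h rmorphN1. Qed.

Lemma Re_max (y : algC) : y ^+ m = -1 -> reR y <= reR zz.
Proof.
move=> hy.
have [h|h] := lerP 0 (imR y).
  exact: (rootC_Re_max m_gt0 hy h).
rewrite -reRc; apply: (rootC_Re_max m_gt0 (conjm hy)).
change (0 <= imR y^*); rewrite imRc; lra.
Qed.

Lemma Re_z_gt0 : 0 < reR zz.
Proof.
have [p pp] := C_prim_root_exists (ltn0Sn (m.*2).-1).
have m2 : (m.*2).-1.+1 = m.*2 by rewrite prednK // double_gt0.
rewrite m2 in pp.
have pne1 : forall k, (0 < k < m.*2)%N -> p ^+ k != 1.
  move=> k hk; rewrite -(expr0 p) (eq_prim_root_expr pp) mod0n modn_small; lia.
have pm : p ^+ m = -1.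
  have : (p ^+ m) ^+ 2 == 1 by rewrite -exprM muln2 prim_expr_order.
  rewrite sqrf_eq1 => /orP[|/eqP //].
  by rewrite (negPf (pne1 m _)) //; lia.
have s0 : \sum_(k < m) p ^+ k.*2.+1 = 0.
  have h : (p ^+ 2 - 1) * \sum_(k < m) (p ^+ 2) ^+ k = 0.
    by rewrite -subrX1 -exprM mul2n prim_expr_order // subrr.
  have : p ^+ 2 - 1 != 0.
    rewrite subr_eq0 pne1 //; lia.
  move=> /negPf hne; move/eqP: h; rewrite mulf_eq0 hne /= => /eqP h.
  transitivity (p * \sum_(k < m) (p ^+ 2) ^+ k); last by rewrite h mulr0.
  rewrite mulr_sumr; apply: eq_bigr => k _.
  by rewrite -exprM -exprS mul2n.
rewrite ltNge; apply/negP => hz.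
have : reR (\sum_(k < m) p ^+ k.*2.+1) = 0 by rewrite s0; apply: val_inj => /=; rewrite raddf0.
have -> : reR (\sum_(k < m) p ^+ k.*2.+1) = \sum_(k < m) reR (p ^+ k.*2.+1).
  by apply: val_inj => /=; rewrite !raddf_sum.
have hn : (m./2 < m)%N by rewrite -divn2 ltn_Pdiv.
rewrite (bigD1 (Ordinal hn)) //=.
have -> : (m./2).*2.+1 = m by rewrite -[RHS](odd_double_half m) m_odd add1n.
rewrite pm reRN1.
have : \sum_(i < m | i != Ordinal hn) reR (p ^+ i.*2.+1) <= 0.
  apply: sumr_le0 => i _; apply: le_trans hz; apply: Re_max.
  by rewrite exprAC pm exprS -mul2n exprM sqrrN expr1n expr1n mulr1.
move=> h1; rewrite addrC => /eqP; rewrite subr_eq0 => /eqP h2.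
by rewrite h2 ler10 in h1.
Qed.

Lemma Im_z_gt0 : 0 < imR zz.
Proof.
have h0 : 0 <= imR zz by exact: Im_rootC_ge0.
rewrite lt_neqAle h0 andbT; apply/negP => /eqP h.
have hz := imR0_real (esym h).
have hu := unitR (unitm zm).
have hre := Re_z_gt0.
have h1 : reR zz = 1 by rewrite -h in hu; nra.
have : zz = 1 by rewrite hz h1.
move=> e; have := zm; rewrite e expr1n => /(congr1 (fun x => reR x)); rewrite reR1 reRN1.
move=> /eqP; rewrite -subr_eq0 opprK; apply/negP; rewrite gt_eqF //; lra.
Qed.


Lemma prim_ex : exists2 p : algC, (m.*2).-primitive_root p & p ^+ m = -1.
Proof.
have [p pp] := C_prim_root_exists (ltn0Sn (m.*2).-1).
have m2 : (m.*2).-1.+1 = m.*2 by rewrite prednK // double_gt0.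
rewrite m2 in pp; exists p => //.
have pne1 : forall k, (0 < k < m.*2)%N -> p ^+ k != 1.
  move=> k hk; rewrite -(expr0 p) (eq_prim_root_expr pp) mod0n modn_small; lia.
have : (p ^+ m) ^+ 2 == 1 by rewrite -exprM muln2 prim_expr_order.
rewrite sqrf_eq1 => /orP[|/eqP //].
by rewrite (negPf (pne1 m _)) //; lia.
Qed.

Lemma unitX (j : nat) : `|zz ^+ j| = 1.
Proof. by rewrite normrX (unitm zm) expr1n. Qed.

Lemma unitRX (j : nat) : reR (zz ^+ j) ^+ 2 + imR (zz ^+ j) ^+ 2 = 1.
Proof. exact: unitR (unitX j). Qed.

Lemma zmX (j : nat) : (zz ^+ j) ^+ m = (-1) ^+ j.
Proof. by rewrite exprAC zm. Qed.

Lemma no_early (e : nat) : (0 < e < m)%N -> zz ^+ e = -1 ->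
  (forall j, (0 < j < e)%N -> 0 < imR (zz ^+ j)) -> False.
Proof.
move=> he hze pos.
have imge : forall j, (j <= e)%N -> 0 <= imR (zz ^+ j).
  move=> j hj; case: (posnP j) => [->|hj0]; first by rewrite expr0 imR1.
  case: (ltngtP j e) => [hje|hje|hje].
  - by apply: ltW; apply: pos; rewrite hj0 hje.
  - lia.
  - by rewrite hje hze imRN1.
have hzre := Re_z_gt0; have hzim := Im_z_gt0.
have member : forall y : algC, y ^+ m = -1 -> 0 <= imR y -> exists2 i, (i <= e)%N & y = zz ^+ i.
  move=> y hy hyi.
  have uy := unitR (unitm hy).
  suff H : forall k j, (j + k = e)%N -> reR y <= reR (zz ^+ j) -> exists2 i, (i <= e)%N & y = zz ^+ i.
    apply: (H e 0%N) => //; rewrite expr0 reR1; nra.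
  elim => [|k IH] j hjk hyj.
    rewrite addn0 in hjk; rewrite hjk in hyj; exists e => //.
    rewrite hze reRN1 in hyj.
    have h1 : imR y = 0 by nra.
    have h2 : reR y = -1 by nra.
    by rewrite hze (imR0_real h1) h2.
  have [h|h] := lerP (reR y) (reR (zz ^+ j.+1)).
    by apply: (IH j.+1) => //; rewrite addSnnS.
  have hje : (j < e)%N by lia.
  have [heq|hne] := eqVneq (reR y) (reR (zz ^+ j)).
    exists j; first exact: ltnW.
    apply: eqC_semipolar; first by rewrite (unitm hy) unitX.
      by move/(congr1 val): heq.
    by apply: mulr_ge0; [exact: hyi | exact: (imge j (ltnW hje))].
  have hlt : reR y < reR (zz ^+ j) by rewrite lt_neqAle hne hyj.
  have u1 := unitRX j.+1; have u2 := unitRX j.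
  have b1 : reR (zz ^+ j) <= 1 by nra.
  have b2 : -1 <= reR (zz ^+ j.+1) by nra.
  have b3 : reR y ^+ 2 < 1 by nra.
  have b4 : 0 < imR y ^+ 2 by lra.
  have hyp : 0 < imR y.
    rewrite lt_neqAle hyi andbT; apply/negP => /eqP h0.
    by rewrite -h0 expr2 mulr0 ltxx in b4.
  set x := zz ^+ j.
  have hx1 : `|x| = 1 := unitX j.
  have hxz : zz ^+ j.+1 = x * zz by rewrite exprSr.
  have c1 : 0 < imR (y * x^*).
    apply: crossC => //; [exact: unitm hy|exact: imge (ltnW hje)|].
    have := imge j (ltnW hje); rewrite -/x; lra.
  have c2 : 0 < imR (zz ^+ j.+1 * y^*).
    have i1 := imge j.+1 hje.
    apply: crossC; [exact: unitm hy|exact: unitX|exact: hyi|exact: i1|lra|exact: h].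
  have hprod : (y * x^*) * (zz ^+ j.+1 * y^*) = zz.
    rewrite hxz.
    have -> : y * x^* * (x * zz * y^*) = (y^* * y) * (x^* * x) * zz by ring.
    by rewrite !norm_conjX ?mul1r //; exact: unitm hy.
  have uu1 : `|y * x^*| = 1 by rewrite normrM norm_conjC hx1 (unitm hy) mulr1.
  have uu2 : `|zz ^+ j.+1 * y^*| = 1 by rewrite normrM norm_conjC unitX (unitm hy) mulr1.
  have p1 := prodC uu1 uu2 c1 c2; rewrite hprod in p1.
  have p2 := prodC uu2 uu1 c2 c1; rewrite mulrC hprod in p2.
  move: (p1 hzre hzim) (p2 hzre hzim) => q1 q2.
  case: (boolP (odd j)) => hodd.
    have : (zz ^+ j.+1 * y^*) ^+ m = -1.
      by rewrite exprMn zmX (conjm hy) -signr_odd /= hodd expr0 mul1r.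
    move=> /Re_max; lra.
  have : (y * x^*) ^+ m = -1.
    by rewrite exprMn hy -rmorphXn zmX -signr_odd (negPf hodd) expr0 rmorph1 mulr1.
  move=> /Re_max; lra.
have all2e : forall y : algC, y ^+ m = -1 -> y ^+ e.*2 = 1.
  have aux : forall y : algC, y ^+ m = -1 -> 0 <= imR y -> y ^+ e.*2 = 1.
    move=> y hy hyi; have [i _ ->] := member y hy hyi.
    by rewrite exprAC -muln2 exprM hze sqrrN expr1n expr1n.
  move=> y hy; have [h|h] := lerP 0 (imR y); first exact: aux.
  have := aux _ (conjm hy); rewrite imRc => /(_ ltac:(lra)).
  by rewrite -rmorphXn => /(congr1 (@Num.conj _)); rewrite conjCK conjC1.
have [p pp pm] := prim_ex.
have hm2e : (m <= e.*2)%N.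
  pose rs := [seq p ^+ k.*2.+1 | k <- iota 0 m].
  have e2 : (0 < e.*2)%N by lia.
  have := @max_poly_roots _ ('X^(e.*2) - 1) rs.
  rewrite size_Xn_sub_1 // size_map size_iota ltnS; apply.
  - by rewrite -size_poly_eq0 size_Xn_sub_1.
  - apply/allP => y /mapP [k _ ->]; rewrite /root !hornerE subr_eq0; apply/eqP.
    apply: all2e; rewrite exprAC pm exprS -mul2n exprM sqrrN expr1n expr1n mulr1 //.
  - rewrite map_inj_in_uniq ?iota_uniq // => a b.
    rewrite !mem_iota !add0n => ha hb /eqP; rewrite (eq_prim_root_expr pp).
    rewrite !modn_small; lia.
have zme : zz ^+ (m - e) = 1.
  have : zz ^+ e * zz ^+ (m - e) = zz ^+ m.
    by rewrite -exprD subnKC // ltnW // (proj2 (andP he)).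
  by rewrite hze zm mulN1r => /eqP; rewrite eqr_opp => /eqP.
have zne1 : forall k, (0 < k < e.*2)%N -> zz ^+ k != 1.
  move=> k hk; apply/negP => /eqP hk1.
  case: (ltngtP k e) => [hke|hke|hke].
  - have hh : (0 < k < e)%N by lia.
    by have := pos k hh; rewrite hk1 imR1 ltxx.
  - have hk' : zz ^+ k = - zz ^+ (k - e).
      have : zz ^+ e * zz ^+ (k - e) = zz ^+ k by rewrite -exprD subnKC // ltnW.
      by rewrite hze mulN1r => <-.
    have : 0 < imR (zz ^+ (k - e)) by apply: pos; lia.
    by rewrite -[zz ^+ (k - e)]opprK -hk' hk1 imRN imR1 oppr0 ltxx.
  - subst k; move: hk1; rewrite hze => /(congr1 reR); rewrite reR1 reRN1 => h.
    have : (1 : algR) + 1 = 0 by rewrite -{2}h subrr.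
    by move/eqP; rewrite gt_eqF // addr_gt0.
have : (e.*2 <= m - e)%N.
  rewrite leqNgt; apply/negP => hlt.
  have hh : (0 < m - e < e.*2)%N by lia.
  by have := zne1 (m - e)%N hh; rewrite zme eqxx.
lia.
Qed.


Lemma Im_pos (j0 : nat) : (0 < j0 < m)%N -> 0 < imR (zz ^+ j0).
Proof.
move=> hj0; rewrite ltNge; apply/negP => hneg.
pose P := fun j => (0 < j < m)%N && (imR (zz ^+ j) <= 0).
have exP : exists j, P j by exists j0; rewrite /P hj0 hneg.
case: (ex_minnP exP) => e /andP[he hne] emin.
have pos : forall j, (0 < j < e)%N -> 0 < imR (zz ^+ j).
  move=> j hj; rewrite ltNge; apply/negP => h.
  have : (e <= j)%N by apply: emin; rewrite /P h andbT; lia.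
  lia.
have hzre := Re_z_gt0; have hzim := Im_z_gt0.
have e2 : (1 < e)%N.
  case: (ltngtP e 1) => [h|//|h]; first by lia.
  by move: hne; rewrite h expr1 leNgt hzim.
set x := zz ^+ e.-1.
have hxz : zz ^+ e = x * zz by rewrite -exprSr prednK //; lia.
have hx1 : `|x| = 1 := unitX e.-1.
have hxi : 0 < imR x by apply: pos; lia.
have [hlt|hge] := ltrP (imR (zz ^+ e)) 0.
  pose y1 := - x^*; pose y2 := - (x * zz).
  have u1 : `|y1| = 1 by rewrite normrN norm_conjC.
  have u2 : `|y2| = 1 by rewrite normrN -hxz unitX.
  have i1 : 0 < imR y1 by rewrite /y1 imRN imRc opprK.
  have i2 : 0 < imR y2 by rewrite /y2 imRN -hxz; lra.
  have hp : y1 * y2 = zz by rewrite /y1 /y2 mulrNN mulrA norm_conjX // mul1r.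
  have p1 := prodC u1 u2 i1 i2; rewrite hp in p1.
  have p2 := prodC u2 u1 i2 i1; rewrite mulrC hp in p2.
  move: (p1 hzre hzim) (p2 hzre hzim) => q1 q2.
  case: (boolP (odd e)) => hodd.
    have : y1 ^+ m = -1.
      rewrite /y1 exprNn N1m -rmorphXn zmX -signr_odd.
      have -> : odd e.-1 = false.
        by move: hodd; rewrite -{1}(prednK (ltnW e2)) /= => /negbTE.
      by rewrite expr0 rmorph1 mulr1.
    move=> /Re_max; lra.
  have : y2 ^+ m = -1.
    rewrite /y2 exprNn N1m -hxz zmX -signr_odd (negPf hodd) expr0 mulN1r //.
  move=> /Re_max; lra.
have h0 : imR (zz ^+ e) = 0 by apply/eqP; rewrite eq_le hne hge.
have st := stepC hx1 (unitm zm) (ltW hxi) hzre hzim.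
rewrite -hxz in st; have := st hge => st'.
have ux := unitR hx1; have uz := unitRX e.
have uz' : reR (zz ^+ e) ^+ 2 = 1 by rewrite h0 expr0n /= addr0 in uz.
have xl : reR x <= 1 by nra.
have r1 : reR (zz ^+ e) < 1 by lra.
have hre : reR (zz ^+ e) = -1.
  apply/eqP; rewrite eq_le; apply/andP; split; nra.
have ze : zz ^+ e = -1 by rewrite (imR0_real h0) hre.
apply: (no_early (e := e)) => //; lia.
Qed.

Lemma Im_ge (j : nat) : (j <= m)%N -> 0 <= imR (zz ^+ j).
Proof.
move=> hj; case: (posnP j) => [->|hj0]; first by rewrite expr0 imR1.
case: (ltngtP j m) => [h|h|h]; [apply: ltW; apply: Im_pos; lia|lia|].
by rewrite h zm imRN1.
Qed.

Lemma Re_step (j : nat) : (j < m)%N -> reR (zz ^+ j.+1) < reR (zz ^+ j).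
Proof.
move=> hj; rewrite exprSr; apply: stepC.
- exact: unitX.
- exact: unitm zm.
- exact: Im_ge (ltnW hj).
- exact: Re_z_gt0.
- exact: Im_z_gt0.
- by rewrite -exprSr; apply: Im_ge.
Qed.

Lemma Re_dec (j k : nat) : (j < k)%N -> (k <= m)%N -> reR (zz ^+ k) < reR (zz ^+ j).
Proof.
move=> hjk; elim: k hjk => [//|k IH] hjk hk.
have s := Re_step hk.
case: (ltngtP j k) => [h|h|h].
- exact: lt_trans s (IH h (ltnW hk)).
- lia.
- by rewrite h.
Qed.

End Zeta.


Lemma mu_eq (n : nat) (w : algC) : w^* * w = 1 -> w ^+ (2 * n + 1) = -1 ->
  (- w ^+ 2) ^+ n * (1 - - w ^+ 2) = (-1) ^+ n.+1 * (w + w^*).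
Proof.
move=> cw wm.
have h2n : w ^+ (2 * n) = - w^*.
  have hw : w ^+ (2 * n) * w = -1 by rewrite -exprSr -addn1.
  have : w ^+ (2 * n) = w ^+ (2 * n) * (w * w^*) by rewrite (mulrC w) cw mulr1.
  by rewrite mulrA hw mulN1r.
rewrite (exprNn (w ^+ 2)) -exprM h2n opprK.
have e : w^* * w ^+ 2 = w by rewrite expr2 mulrA cw mul1r.
have -> : (-1) ^+ n * - w^* * (1 + w ^+ 2) = - (-1) ^+ n * (w^* + w^* * w ^+ 2) by ring.
rewrite e exprS; ring.
Qed.

Definition xv (n : nat) (s : algC) (k : nat) := s ^+ k + s ^+ ((2 * n).-1 - k).

Lemma eigvec (n : nat) (s : algC) (i : 'I_n) : s ^+ (2 * n + 1) = -1 ->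
  s ^+ n * (1 - s) * \sum_(k < n) (xv n s k * antireg_adj n k i) = xv n s i.
Proof.
move=> sm.
have hi := ltn_ord i.
set lo := (n - 1 - i)%N.
have -> : \sum_(k < n) (xv n s k * antireg_adj n k i) = \sum_(lo <= k < n) xv n s k.
  under eq_bigr do rewrite mxE.
  rewrite -(big_mkord xpredT (fun k => xv n s k * (if (n <= k + i + 1)%N then 1 else 0))).
  rewrite (@big_cat_nat _ _ _ lo) /=; [|lia|lia].
  rewrite big_nat_cond big1 ?add0r; last first.
    by move=> k /andP[/andP[_ hk] _]; rewrite ifF ?mulr0 //; apply/negbTE; rewrite -ltnNge; lia.
  apply: eq_big_nat => k hk; rewrite ifT ?mulr1 //; lia.
rewrite -mulrA mulr_sumr.
rewrite (@telescope_sumr_eq _ _ _ (fun k => s ^+ (2 * n - k) - s ^+ k)); [|lia|].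
  have -> : (2 * n - n = n)%N by lia.
  rewrite subrr sub0r mulrN mulrBr -!exprD opprB.
  have -> : (n + (2 * n - lo) = (2 * n + 1) + i)%N by lia.
  have -> : (n + lo = (2 * n).-1 - i)%N by lia.
  by rewrite exprD sm mulN1r opprK /xv addrC.
move=> k hk; rewrite /xv.
have -> : (2 * n - k = ((2 * n).-1 - k).+1)%N by lia.
have -> : (2 * n - k.+1 = (2 * n).-1 - k)%N by lia.
rewrite !exprS; ring.
Qed.

Lemma two_Re (w : algC) : 2 * 'Re w = w + w^*.
Proof. by rewrite ReE mulrC divfK // pnatr_eq0. Qed.

Lemma eig_expr (n j : nat) :
  antireg_eig n j = (-1) ^+ n.+1 / (2 * 'Re (zz (2 * n + 1) ^+ (2 * j - 1))).
Proof. by []. Qed.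

Lemma is_eig (n j : nat) : (0 < n)%N -> (j < n)%N ->
  eigenvalue (antireg_adj n) (antireg_eig n j.+1).
Proof.
move=> hn hj.
set m := (2 * n + 1)%N.
have m_odd : odd m by rewrite /m addn1 /= mul2n odd_double.
have m_gt1 : (1 < m)%N by rewrite /m; lia.
set a := (2 * j.+1 - 1)%N.
have a_odd : odd a.
  have -> : a = (j.*2).+1 by rewrite /a; lia.
  by rewrite /= odd_double.
have a_lt : (a < m)%N by rewrite /a /m; lia.
set w := zz m ^+ a.
have wm : w ^+ m = -1 by rewrite /w zmX // -signr_odd a_odd expr1.
have cw : w^* * w = 1 by apply: norm_conjX; apply: unitX.
set s := - w ^+ 2.
have sm : s ^+ (2 * n + 1) = -1.
  by rewrite /s exprNn -/m N1m // exprAC wm sqrrN expr1n mulN1r.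
set mu := s ^+ n * (1 - s).
have hmu : mu = (-1) ^+ n.+1 * (w + w^*) by rewrite /mu /s mu_eq.
have hlam : antireg_eig n j.+1 = mu^-1.
  rewrite eig_expr -/m -/a -/w two_Re hmu invfM.
  by rewrite -exprVn invrN1.
have s0 : s != 0.
  apply/negP => /eqP h; move: sm; rewrite h expr0n addn1 /= => /eqP.
  by rewrite eq_sym oppr_eq0 oner_eq0.
have s1 : 1 + s != 0.
  rewrite /s subr_eq0 eq_sym sqrf_eq1; apply/negP => /orP[] /eqP hw.
    move: wm; rewrite hw expr1n => /eqP; rewrite -subr_eq0 opprK.
    by rewrite (_ : 1 + 1 = 2%:R) // pnatr_eq0.
  have := Re_dec m_odd m_gt1 a_lt (leqnn m).
  by rewrite zm // -/w hw ltxx.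
have hn1 : (n.-1 < n)%N by lia.
set i0 : 'I_n := Ordinal hn1.
have x0 : xv n s i0 != 0.
  rewrite /xv /= (_ : ((2 * n).-1 - n.-1)%N = n.-1.+1); last by lia.
  by rewrite exprS -[X in X + _]mul1r -mulrDl mulf_neq0 // expf_neq0.
have mu0 : mu != 0.
  apply/negP => /eqP h; have := eigvec i0 sm; rewrite -/mu h !mul0r => e.
  by move: x0; rewrite -e eqxx.
apply/eigenvalueP; exists (\row_k xv n s k); last first.
  apply/negP => /eqP /rowP /(_ i0); rewrite !mxE => e.
  by move: x0; rewrite e eqxx.
apply/rowP => i; rewrite !mxE hlam.
have := eigvec i sm; rewrite -/mu => e.
rewrite -[in RHS]e mulKf //; apply: eq_bigr => k _; rewrite mxE.
by [].
Qed.

Lemma eig_inj (n j k : nat) : (0 < n)%N -> (j < n)%N -> (k < n)%N ->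
  antireg_eig n j.+1 = antireg_eig n k.+1 -> j = k.
Proof.
move=> hn hj hk.
set m := (2 * n + 1)%N.
have m_odd : odd m by rewrite /m addn1 /= mul2n odd_double.
have m_gt1 : (1 < m)%N by rewrite /m; lia.
have key : forall j k, (j < k < n)%N ->
    'Re (zz m ^+ (2 * j.+1 - 1)) != 'Re (zz m ^+ (2 * k.+1 - 1)).
  move=> j' k' hjk; apply/negP => /eqP e.
  have : reR (zz m ^+ (2 * k'.+1 - 1)) < reR (zz m ^+ (2 * j'.+1 - 1)).
    by apply: Re_dec => //; rewrite /m; lia.
  have -> : reR (zz m ^+ (2 * k'.+1 - 1)) = reR (zz m ^+ (2 * j'.+1 - 1)) by apply: val_inj.
  by rewrite ltxx.
rewrite !eig_expr -/m => /mulfI; rewrite signr_eq0 => /(_ isT) /invr_inj /mulfI.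
rewrite pnatr_eq0 => /(_ isT) e.
case: (ltngtP j k) => [h|h|//].
- have hh : (j < k < n)%N by lia.
  by move: (key j k hh); rewrite e eqxx.
- have hh : (k < j < n)%N by lia.
  by move: (key k j hh); rewrite e eqxx.
Qed.

Unset Implicit Arguments.
Set Strict Implicit.

Theorem mainTheorem6 (n : nat) (hn : (1 <= n)%N) :
  char_poly (antireg_adj n) = \prod_(j < n) ('X - (antireg_eig n j.+1)%:P)
  /\ (forall j : 'I_n, mup (antireg_eig n j.+1) (char_poly (antireg_adj n)) = 1%N).
Proof.
set f := fun j : 'I_n => antireg_eig n j.+1.
have -> : \prod_(j < n) ('X - (antireg_eig n j.+1)%:P) =
    \prod_(x <- [seq f j | j <- index_enum 'I_n]) ('X - x%:P).
  by rewrite big_map.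
set rs := [seq f j | j <- index_enum 'I_n].
have huniq : uniq rs.
  rewrite map_inj_uniq ?index_enum_uniq // => j k /eig_inj h.
  by apply: ord_inj; apply: h.
have hroots : all (root (char_poly (antireg_adj n))) rs.
  apply/allP => x /mapP [j _ ->]; rewrite -eigenvalue_root_char.
  exact: is_eig.
have hu2 : uniq_roots rs by rewrite uniq_rootsE.
have hdvd := uniq_roots_dvdp hroots hu2.
have E : char_poly (antireg_adj n) = \prod_(x <- rs) ('X - x%:P).
  apply/eqP; rewrite -eqp_monic ?char_poly_monic ?monic_prod_XsubC //.
  rewrite eqp_sym -dvdp_size_eqp // size_char_poly size_prod_XsubC size_map.
  by rewrite /index_enum unlock -enumT size_enum_ord.
split => // j; rewrite E mu_prod_XsubC count_uniq_mem //.
have hj : f j \in rs by rewrite map_f // mem_index_enum.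
by move: hj; rewrite /f => ->.
Qed.
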